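(* Let $\mathcal{F}$ be a $3$-uniform linear family and let $\mathcal{M}$ be a matching (not necessarily maximum) of $\mathcal{F}$ with $n=|\mathcal{M}|\geq 3$. If $|D_2(A,B,C)|\leq 21$ for all $3$-element subsets $\{A,B,C\}\subseteq\mathcal{M}$, then $|D_2(\mathcal{F},\mathcal{M})|+|D_3(\mathcal{F},\mathcal{M})\setminus\mathcal{M}|\leq\frac{23}{n-2}\binom{n}{3}$.
   Context: A family is a finite collection of distinct subsets of a vertex set; $3$-uniform means every member has exactly $3$ elements and linear means any two distinct members share at most one vertex. A matching is a collection of pairwise disjoint members. $X_{\mathcal{M}}=\bigcup_{A\in\mathcal{M}}A$. For $i\in\{0,1,2,3\}$, $D_i(\mathcal{F},\mathcal{M})=\{E\in\mathcal{F}:|E\cap X_{\mathcal{M}}|=i\}$. For $\{A,B,C\}\subseteq\mathcal{M}$, $D_2(A,B,C)=\{E\in D_2(\mathcal{F},\mathcal{M}):|E\cap(A\cup B\cup C)|=2\}$. *)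

(* Defs.v *)
From mathcomp Require Import all_boot all_order all_algebra.
Set Implicit Arguments. Unset Strict Implicit. Unset Printing Implicit Defensive.

Section Families.
Variable T : finType.

Definition uniform3 (F : {set {set T}}) : Prop := forall E, E \in F -> #|E| = 3.

Definition linear_family (F : {set {set T}}) : Prop :=
  forall E E', E \in F -> E' \in F -> E != E' -> #|E :&: E'| <= 1.

Definition matching_of (F M : {set {set T}}) : Prop :=
  M \subset F /\ forall A B, A \in M -> B \in M -> A != B -> [disjoint A & B].

Definition XM (M : {set {set T}}) : {set T} := \bigcup_(A in M) A.

Definition Di (F M : {set {set T}}) (i : nat) : {set {set T}} :=
  [set E in F | #|E :&: XM M| == i].

Definition D2abc (F M : {set {set T}}) (A B C : {set T}) : {set {set T}} :=
  [set E in Di F M 2 | #|E :&: (A :|: B :|: C)| == 2].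

End Families.

(* Main.v *)
Require Import Defs.
From mathcomp Require Import all_boot all_order all_algebra zify.
Set Implicit Arguments. Unset Strict Implicit. Unset Printing Implicit Defensive.

Section S.
Variable T : finType.
Variables F M : {set {set T}}.
Hypothesis hU : uniform3 F.
Hypothesis hL : linear_family F.
Hypothesis hM : matching_of F M.

Definition ME (E : {set T}) := [set A in M | E :&: A != set0].

Lemma sum_ind (U : finType) (A : {set U}) (P : pred U) :
  \sum_(x in A) (P x : nat) = #|[set x in A | P x]|.
Proof.
rewrite -sum1dep_card [RHS]big_mkcond [LHS]big_mkcond; apply: eq_bigr => x _.
by case: (x \in A); case: (P x).
Qed.

Lemma XM_sub A : A \in M -> A \subset XM M.
Proof. by move=> hA; apply: (bigcup_sup A). Qed.

Lemma mem_uniq x A B : A \in M -> B \in M -> x \in A -> x \in B -> A = B.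
Proof.
move=> hA hB xA xB; apply/eqP; apply: contraT => nAB.
have := hM.2 A B hA hB nAB; move/disjointFr=> /(_ x xA).
by rewrite xB.
Qed.

Lemma MinF A : A \in M -> A \in F.
Proof. by move=> hA; apply: (subsetP hM.1). Qed.

Lemma two_le (x y : T) (X : {set T}) : x != y -> x \in X -> y \in X -> 2 <= #|X|.
Proof.
move=> nxy hx hy; have: [set x; y] \subset X by apply/subsetP=> z; rewrite !inE => /orP[]/eqP->.
by move/subset_leq_card; rewrite cards2 nxy.
Qed.

Lemma inter_le1 E A : E \in F -> E \notin M -> A \in M -> #|E :&: A| <= 1.
Proof.
move=> hE nE hA; apply: hL => //; first exact: MinF.
by apply: contraNneq nE => ->.
Qed.

Definition fM (x : T) := odflt set0 [pick A in M | x \in A].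

Lemma fM_spec x : x \in XM M -> fM x \in M /\ x \in fM x.
Proof.
rewrite /fM; case: pickP => [A /andP[hA xA] _| H] //=.
by case/bigcupP=> A hA xA; move: (H A); rewrite hA xA.
Qed.

Lemma kval E : E \in F -> E \notin M -> #|ME E| = #|E :&: XM M|.
Proof.
move=> hE nE.
have -> : ME E = fM @: (E :&: XM M).
  apply/setP=> A; rewrite !inE; apply/idP/imsetP.
  - case/andP=> hA /set0Pn[x]; rewrite inE => /andP[xE xA].
    have xX : x \in XM M by apply: (subsetP (XM_sub hA)).
    exists x; first by rewrite inE xE.
    by have [h1 h2] := fM_spec xX; exact: (mem_uniq hA h1 xA h2).
  - case=> x; rewrite inE => /andP[xE xX] ->.
    have [h1 h2] := fM_spec xX; rewrite h1 /=.
    by apply/set0Pn; exists x; rewrite inE xE.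
apply: card_in_imset => x y; rewrite !inE => /andP[xE xX] /andP[yE yX] fxy.
apply/eqP; apply: contraT => nxy.
have [h1 h2] := fM_spec xX; have [h3 h4] := fM_spec yX.
rewrite -fxy in h4.
have := inter_le1 hE nE h1.
by have := two_le nxy (_ : x \in E :&: fM x) (_ : y \in E :&: fM x); rewrite !inE xE yE h2 h4 => /(_ isT isT); case: #|_| => [|[|]].
Qed.


Lemma D2_notM E : E \in Di F M 2 -> E \notin M.
Proof.
rewrite inE => /andP[hE h2]; apply/negP => hEM.
move: h2; rewrite (setIidPl (XM_sub hEM)) hU //; exact: MinF.
Qed.

Lemma kD2 E : E \in Di F M 2 -> #|ME E| = 2.
Proof.
move=> h; rewrite kval ?D2_notM //; move: h; rewrite inE => /andP[? /eqP] //.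
Qed.

Lemma kD3 E : E \in Di F M 3 :\: M -> #|ME E| = 3.
Proof.
rewrite !inE => /andP[nE /andP[hE /eqP h3]]; by rewrite kval.
Qed.

Lemma pickIn (X : {set T}) (a0 : T) : X != set0 -> odflt a0 [pick x in X] \in X.
Proof.
case: pickP => [x hx|H] //= /set0Pn[x hx]; by move: (H x); rewrite hx.
Qed.

Lemma pair_bound (S : {set {set T}}) A B : S \subset F -> A \in M -> B \in M -> A != B ->
  #|[set E in S | (A \in ME E) && (B \in ME E)]| <= 9.
Proof.
move=> SF hA hB nAB.
have cA : #|A| = 3 by apply: hU; exact: MinF.
have cB : #|B| = 3 by apply: hU; exact: MinF.
have /card_gt0P[a0 _] : 0 < #|A| by rewrite cA.
pose h E := (odflt a0 [pick x in E :&: A], odflt a0 [pick y in E :&: B]).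
set G := [set E in S | _].
have hG E : E \in G -> [/\ E \in F, h E \in setX A B, (h E).1 \in E & (h E).2 \in E].
  rewrite /G !inE => /and3P[hS hAE hBE].
  move: hAE hBE; rewrite ?inE hA hB /= => /(pickIn a0) hx /(pickIn a0) hy.
  move: hx hy; rewrite !inE => /andP[-> ->] /andP[-> ->].
  by rewrite (subsetP SF).
rewrite -(card_in_imset (f := h)); last first.
  move=> E E' /hG[hE hX hx hy] /hG[hE' _ hx' hy'] eqh.
  apply/eqP; apply: contraT => nEE.
  have := hL hE hE' nEE.
  move: hX; rewrite !inE => /andP[xA yB].
  have nxy : (h E).1 != (h E).2.
    by apply: contra nAB => /eqP exy; rewrite -exy in yB; rewrite (mem_uniq hA hB xA yB).
  have := two_le nxy (_ : (h E).1 \in E :&: E') (_ : (h E).2 \in E :&: E').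
  rewrite !inE hx hy eqh hx' hy' => /(_ isT isT).
  by case: #|_| => [|[|]].
apply: leq_trans (_ : #|setX A B| <= 9); last by rewrite cardsX cA cB.
apply: subset_leq_card; apply/subsetP => p /imsetP[E /hG[_ hX _ _] ->] //.
Qed.


Definition gS (S : {set {set T}}) X Y := #|[set E in S | (X \in ME E) && (Y \in ME E)]|.

Lemma three_le (A B C : {set T}) (X : {set {set T}}) : A != B -> A != C -> B != C ->
  A \in X -> B \in X -> C \in X -> 3 <= #|X|.
Proof.
move=> nAB nAC nBC hA hB hC.
have: C |: [set A; B] \subset X by apply/subsetP=> z; rewrite !inE => /orP[|/orP[]]/eqP->.
move/subset_leq_card; rewrite cardsU1 cards2 nAB !inE negb_or ![C == _]eq_sym nBC nAC //.
Qed.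

Lemma inD2abc E X Y A B C : E \in Di F M 2 -> X \in M -> Y \in M -> X != Y ->
  X \in ME E -> Y \in ME E -> X \subset A :|: B :|: C -> Y \subset A :|: B :|: C ->
  A \in M -> B \in M -> C \in M -> E \in D2abc F M A B C.
Proof.
move=> hE hX hY nXY; rewrite !inE hX hY /= => /set0Pn[x] /setIP[xE xX] /set0Pn[y] /setIP[yE yY].
move=> sX sY hA hB hC.
move: (hE); rewrite inE => /andP[hEF /eqP c2]; rewrite hEF c2 eqxx /=.
have nxy : x != y by apply: contra nXY => /eqP exy; rewrite -exy in yY; rewrite (mem_uniq hX hY xX yY).
have le1 := two_le nxy (_ : x \in E :&: (A :|: B :|: C)) (_ : y \in E :&: (A :|: B :|: C)).
rewrite !in_setI xE yE /= in le1.
have l1 := le1 (subsetP sX x xX) (subsetP sY y yY).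
have : #|E :&: (A :|: B :|: C)| <= #|E :&: XM M|.
  apply/subset_leq_card/setIS; rewrite !subUset !XM_sub //.
by rewrite c2 eqn_leq l1 => ->.
Qed.

Hypothesis hT : forall A B C, A \in M -> B \in M -> C \in M ->
      A != B -> A != C -> B != C -> (#|D2abc F M A B C| <= 21)%N.

Lemma triple_bound A B C : A \in M -> B \in M -> C \in M ->
      A != B -> A != C -> B != C ->
  gS (Di F M 2) A B + gS (Di F M 2) A C + gS (Di F M 2) B C <= 21.
Proof.
move=> hA hB hC nAB nAC nBC.
rewrite /gS.
set G1 := [set E in Di F M 2 | (A \in ME E) && (B \in ME E)].
set G2 := [set E in Di F M 2 | (A \in ME E) && (C \in ME E)].
set G3 := [set E in Di F M 2 | (B \in ME E) && (C \in ME E)].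
have dis : forall E, E \in Di F M 2 -> A \in ME E -> B \in ME E -> C \in ME E -> False.
  by move=> E hE a b c; have := three_le nAB nAC nBC a b c; rewrite kD2.
have e12 : G1 :&: G2 = set0.
  apply/setP=> E; rewrite !inE; apply/negP => /andP[/and3P[hE a b] /and3P[_ _ c]].
  by apply: (dis E); rewrite inE ?hE ?a ?b ?c.
have e123 : (G1 :|: G2) :&: G3 = set0.
  apply/setP=> E; rewrite !inE; apply/negP => /andP[/orP[/and3P[hE a b]|/and3P[hE a b]] /and3P[_ c d]];
  by apply: (dis E); rewrite inE ?hE ?a ?b ?c ?d.
have -> : #|G1| + #|G2| + #|G3| = #|G1 :|: G2 :|: G3|.
  by rewrite cardsU e123 cards0 subn0 cardsU e12 cards0 subn0.
apply: leq_trans (hT hA hB hC nAB nAC nBC).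
apply: subset_leq_card; apply/subsetP => E; rewrite !in_setU /G1 /G2 /G3.
have sA : A \subset A :|: B :|: C by rewrite -setUA subsetUl.
have sB : B \subset A :|: B :|: C by rewrite -setUA setUCA subsetUl.
have sC : C \subset A :|: B :|: C by rewrite subsetUr.
move=> /orP[/orP[]|] /setIdP[hE /andP[a b]].
- by have := inD2abc hE hA hB nAB a b sA sB hA hB hC.
- by have := inD2abc hE hA hC nAC a b sA sC hA hB hC.
- by have := inD2abc hE hB hC nBC a b sB sC hA hB hC.
Qed.


Definition Ib (A B C : {set T}) : nat := (A != B) && (A != C) && (B != C).

Lemma sumC A B : A \in M -> B \in M -> \sum_(C in M) Ib A B C = (A != B) * (#|M| - 2).
Proof.
move=> hA hB; rewrite /Ib (sum_ind M (fun C => (A != B) && (A != C) && (B != C))).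
case: (eqVneq A B) => [<-|nAB].
  rewrite (_ : [set C in M | _] = set0) ?cards0 //.
  by apply/setP=> C; rewrite !inE ?eqxx ?andbF.
rewrite (_ : [set C in M | _] = M :\ A :\ B); last first.
  apply/setP=> C; rewrite !inE ![C == _]eq_sym; move: nAB; case: (A == B); case: (A == C); case: (B == C); by case: (C \in M).
have := cardsD1 A M; have := cardsD1 B (M :\ A); rewrite hA !inE hB eq_sym nAB /=.
lia.
Qed.

Lemma L1 (f : {set T} -> {set T} -> nat) :
  \sum_(A in M) \sum_(B in M) \sum_(C in M) Ib A B C * f A B
  = (#|M| - 2) * \sum_(A in M) \sum_(B in M) (A != B) * f A B.
Proof.
rewrite big_distrr; apply: eq_bigr => A hA; rewrite big_distrr; apply: eq_bigr => B hB.
rewrite -big_distrl /= sumC //; by rewrite mulnAC mulnC.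
Qed.

Lemma L2 (f : {set T} -> {set T} -> nat) :
  \sum_(A in M) \sum_(B in M) \sum_(C in M) Ib A B C * f A C
  = (#|M| - 2) * \sum_(A in M) \sum_(B in M) (A != B) * f A B.
Proof.
rewrite big_distrr; apply: eq_bigr => A hA; rewrite exchange_big big_distrr; apply: eq_bigr => C hC.
rewrite -big_distrl /= (eq_bigr (fun B => Ib A C B)) ?sumC //; first by rewrite mulnAC mulnC.
move=> B _; rewrite /Ib [C == B]eq_sym.
by case: (A == B); case: (A == C); case: (B == C).
Qed.

Lemma L3 (f : {set T} -> {set T} -> nat) :
  \sum_(A in M) \sum_(B in M) \sum_(C in M) Ib A B C * f B C
  = (#|M| - 2) * \sum_(A in M) \sum_(B in M) (A != B) * f A B.
Proof.
rewrite exchange_big big_distrr; apply: eq_bigr => B hB; rewrite exchange_big big_distrr; apply: eq_bigr => C hC.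
rewrite -big_distrl /= (eq_bigr (fun A => Ib B C A)) ?sumC //; first by rewrite mulnAC mulnC.
move=> A _; rewrite /Ib [B == A]eq_sym [C == A]eq_sym.
by case: (A == B); case: (A == C); case: (B == C).
Qed.

Lemma pair_sum (S : {set {set T}}) :
  \sum_(A in M) \sum_(B in M) (A != B) * gS S A B = \sum_(E in S) #|ME E| * (#|ME E| - 1).
Proof.
transitivity (\sum_(A in M) \sum_(B in M) \sum_(E in S) (A != B) * ((A \in ME E) && (B \in ME E))).
  apply: eq_bigr => A _; apply: eq_bigr => B _.
  by rewrite /gS -(sum_ind S (fun E => (A \in ME E) && (B \in ME E))) big_distrr.
transitivity (\sum_(A in M) \sum_(E in S) \sum_(B in M) (A != B) * ((A \in ME E) && (B \in ME E))).
  by apply: eq_bigr => A _; rewrite exchange_big.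
rewrite exchange_big; apply: eq_bigr => E _.
set X := ME E.
have XM : X \subset M by apply/subsetP=> A; rewrite !inE => /andP[].
transitivity (\sum_(A in M) (A \in X) * (#|X| - 1)).
  apply: eq_bigr => A hA; case hAX: (A \in X).
    rewrite mul1n (eq_bigr (fun B => ((B \in X) && (A != B) : nat))); last first.
      by move=> B _; case: (A != B); case: (B \in X).
    rewrite sum_ind (_ : [set B in M | _] = X :\ A); last first.
      apply/setP=> B; rewrite !inE [B == A]eq_sym; case: (B \in M); case: (A == B); by rewrite ?andbT ?andbF.
    by have := cardsD1 A X; rewrite hAX; lia.
  by rewrite big1 // => B _; rewrite andFb muln0.
rewrite -big_distrl /= sum_ind (_ : [set A in M | A \in X] = X) //.
by apply/setP=> A; rewrite inE; case hAX: (A \in X); rewrite ?(subsetP XM A hAX) ?andbF.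
Qed.

Lemma N2val : \sum_(A in M) \sum_(B in M) ((A != B) : nat) = #|M| * (#|M| - 1).
Proof.
rewrite -sum_nat_const; apply: eq_bigr => A hA.
rewrite sum_ind (_ : [set B in M | A != B] = M :\ A).
  by have := cardsD1 A M; rewrite hA; lia.
by apply/setP=> B; rewrite !inE eq_sym andbC.
Qed.

End S.
Unset Implicit Arguments.
Import GRing.Theory Num.Theory.
Local Open Scope ring_scope.
Theorem proposition9 (T : finType) (F M : {set {set T}}) :
  uniform3 F -> linear_family F -> matching_of F M ->
  (3 <= #|M|)%N ->
  (forall A B C, A \in M -> B \in M -> C \in M ->
      A != B -> A != C -> B != C -> (#|D2abc F M A B C| <= 21)%N) ->
  ((#|Di F M 2| + #|Di F M 3 :\: M|)%:R : rat)
    <= 23%:R / (#|M| - 2)%:R * ('C(#|M|, 3))%:R.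
Proof.
move=> hU hL hM n3 hT.
have n2 : (0 < #|M| - 2)%N by rewrite subn_gt0.
rewrite mulrAC -natrM ler_pdivlMr ?ltr0n // -natrM ler_nat.
set D2 := Di F M 2; set D3 := Di F M 3 :\: M.
set N := (#|M| * (#|M| - 1))%N.
have P2 : (\sum_(A in M) \sum_(B in M) (A != B) * gS M D2 A B = #|D2| * 2)%N.
  rewrite pair_sum -sum_nat_const; apply: eq_bigr => E hE.
  by rewrite (kD2 hU hL hM hE).
have h1 : (6 * #|D2| <= 21 * N)%N.
  have H : (\sum_(A in M) \sum_(B in M) \sum_(C in M) Ib A B C *
        (gS M D2 A B + gS M D2 A C + gS M D2 B C) <=
        \sum_(A in M) \sum_(B in M) \sum_(C in M) Ib A B C * (fun _ _ => 21) A B)%N.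
    apply: leq_sum => A hA; apply: leq_sum => B hB; apply: leq_sum => C hC.
    rewrite /Ib; case: (eqVneq A B) => //= nAB; case: (eqVneq A C) => //= nAC;
      case: (eqVneq B C) => //= nBC.
    by rewrite !mul1n (triple_bound hU hL hM hT).
  move: H; rewrite L1.
  have -> : (\sum_(A in M) \sum_(B in M) \sum_(C in M) Ib A B C *
        (gS M D2 A B + gS M D2 A C + gS M D2 B C) =
        \sum_(A in M) \sum_(B in M) \sum_(C in M) Ib A B C * gS M D2 A B +
        \sum_(A in M) \sum_(B in M) \sum_(C in M) Ib A B C * gS M D2 A C +
        \sum_(A in M) \sum_(B in M) \sum_(C in M) Ib A B C * gS M D2 B C)%N.
    rewrite -!big_split /=; apply: eq_bigr => A _; rewrite -!big_split /=.
    apply: eq_bigr => B _; rewrite -!big_split /=; apply: eq_bigr => C _.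
    by rewrite !mulnDr.
  rewrite L1 L2 L3 P2.
  have -> : (\sum_(A in M) \sum_(B in M) (A != B) * 21 = N * 21)%N.
    rewrite /N -N2val big_distrl /=; apply: eq_bigr => A _.
    by rewrite big_distrl.
  by rewrite -!mulnDr leq_pmul2l //; lia.
have h2 : (#|D2| * 2 + #|D3| * 6 <= N * 9)%N.
  have SF : D2 :|: D3 \subset F.
    by apply/subsetP=> E; rewrite !inE => /orP[/andP[]|/andP[_ /andP[]]].
  have dis : [disjoint D2 & D3].
    rewrite -setI_eq0 eqEsubset sub0set andbT; apply/subsetP=> E.
    rewrite !inE => /andP[/andP[_ /eqP h] /andP[_ /andP[_ /eqP h']]].
    by rewrite h in h'.
  have PS : (\sum_(A in M) \sum_(B in M) (A != B) * gS M (D2 :|: D3) A B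
      = #|D2| * 2 + #|D3| * 6)%N.
    rewrite pair_sum (eq_bigl (fun E => E \in [predU D2 & D3])); last first.
      by move=> E; rewrite in_setU.
    rewrite bigU // -!sum_nat_const; congr (_ + _)%N; apply: eq_bigr => E hE.
      by rewrite (kD2 hU hL hM hE).
    by rewrite (kD3 hL hM hE).
  rewrite -PS.
  have -> : (N * 9 = \sum_(A in M) \sum_(B in M) (A != B) * 9)%N.
    rewrite /N -N2val big_distrl /=; apply: eq_bigr => A _.
    by rewrite big_distrl.
  apply: leq_sum => A hA; apply: leq_sum => B hB.
  case: (eqVneq A B) => //= nAB; rewrite !mul1n.
  exact: (pair_bound hU hL hM SF hA hB nAB).
have bin : ('C(#|M|, 3) * 6 = N * (#|M| - 2))%N.
  have := bin_ffact #|M| 3; rewrite !ffactnSr ffactn0 subn0 mul1n /N => <-.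
  by rewrite mulnA.
rewrite -(@leq_pmul2r 6) // mulnAC -[(23 * _ * 6)%N]mulnA bin mulnA.
apply: leq_mul => //; lia.
Qed.
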